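(* Let $\mathcal{H}^-_{A_{n-1}}$ be the degenerate spin affine Hecke algebra of type $A_{n-1}$. Let $\gamma=(\gamma_1,\dots,\gamma_\ell)$ be a composition of $n$ with $n-\ell$ even, and let $\mu$ be the partition of $n$ obtained by reordering the parts of $\gamma$. If $\mu$ has an even part, then $t_\gamma\in[\mathcal{H}^-_{A_{n-1}},\mathcal{H}^-_{A_{n-1}}]$; if all parts of $\mu$ are odd, then $t_\gamma-\epsilon t_\mu\in[\mathcal{H}^-_{A_{n-1}},\mathcal{H}^-_{A_{n-1}}]$ for some $\epsilon\in\{1,-1\}$.
   Context: $\mathbb{C}S_n^-$ is generated by $t_1,\dots,t_{n-1}$ with $t_i^2=1$, $t_it_{i+1}t_i=t_{i+1}t_it_{i+1}$, $(t_it_j)^2=-1$ for $|i-j|>1$. $\mathcal{H}^-_{A_{n-1}}$ is generated by $b_1,\dots,b_n$ (with $b_ib_j=-b_jb_i$ for $i\ne j$) and $\mathbb{C}S_n^-$, subject to $t_ib_i+b_{i+1}t_i=1$ and $t_jb_i+b_it_j=0$ ($i\ne j,j+1$). $[H,H]$ is the linear span of all $hh'-h'h$. For a composition $\gamma$ (sequence of positive integers summing to $n$; a partition is a weakly decreasing one), $t_\gamma=T_1T_2\cdots T_\ell$ where, with $a_k=\gamma_1+\dots+\gamma_{k-1}$, $T_k=t_{a_k+1}t_{a_k+2}\cdots t_{a_k+\gamma_k-1}$ (empty product $1$ if $\gamma_k=1$); thus $t_\gamma$ is a product of $n-\ell$ generators. $t_\mu$ is defined in the same way for the composition $\mu$.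 *)

(* Defs.v *)
From HB Require Import structures.
From mathcomp Require Import all_boot all_order all_algebra.
From mathcomp Require Import Rstruct complex.
Set Implicit Arguments. Unset Strict Implicit. Unset Printing Implicit Defensive.
Import Order.TTheory GRing.Theory Num.Theory.
Local Open Scope ring_scope.

Definition CC : fieldType := complex Rdefinitions.R.

Section SpinHecke.
Variable A : algType CC.

(* Elements t_1..t_{n-1} (t : nat -> A, only indices 1..n-1 matter) and
   b_1..b_n (b : nat -> A, only indices 1..n matter) satisfy the defining
   relations of the degenerate spin affine Hecke algebra H^-_{A_{n-1}}. *)
Definition spin_hecke_rel (n : nat) (t b : nat -> A) : Prop :=
  (forall i, (1 <= i <= n.-1)%N -> t i * t i = 1) /\
  (forall i, (1 <= i)%N -> (i.+1 <= n.-1)%N ->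
      t i * t i.+1 * t i = t i.+1 * t i * t i.+1) /\
  (forall i j, (1 <= i <= n.-1)%N -> (1 <= j <= n.-1)%N ->
      (i.+1 < j)%N || (j.+1 < i)%N -> (t i * t j) ^+ 2 = -1) /\
  (forall i j, (1 <= i <= n)%N -> (1 <= j <= n)%N -> i != j ->
      b i * b j = - (b j * b i)) /\
  (forall i, (1 <= i <= n.-1)%N -> t i * b i + b i.+1 * t i = 1) /\
  (forall i j, (1 <= i <= n)%N -> (1 <= j <= n.-1)%N -> i != j -> i != j.+1 ->
      t j * b i + b i * t j = 0).

Definition in_comm_span (v : A) : Prop :=
  exists s : seq (CC * (A * A)),
    v = \sum_(p <- s) p.1 *: (p.2.1 * p.2.2 - p.2.2 * p.2.1).

Fixpoint t_comp_from (t : nat -> A) (a : nat) (g : seq nat) : A :=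
  match g with
  | [::] => 1
  | k :: g' => (\prod_(a.+1 <= j < a + k) t j) * t_comp_from t (a + k) g'
  end.

Definition t_comp (t : nat -> A) (g : seq nat) : A := t_comp_from t 0 g.

End SpinHecke.

Definition is_composition (n : nat) (g : seq nat) : bool :=
  all (fun k => 0 < k)%N g && (sumn g == n).

Definition comp_sort (g : seq nat) : seq nat := sort geq g.

(* Main.v *)
Require Import Defs.
From HB Require Import structures.
From mathcomp Require Import all_boot all_order all_algebra.
From mathcomp Require Import Rstruct complex zify.
From Stdlib Require Import Classical.
Import GRing.Theory Num.Theory.
Local Open Scope ring_scope.
Set Implicit Arguments. Unset Strict Implicit.

Section Words.
Variables (A : algType CC) (n : nat) (t : nat -> A).
Hypothesis Hsq : forall i, (0 < i < n)%N -> t i * t i = 1.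
Hypothesis Hbr : forall i, (0 < i)%N -> (i.+1 < n)%N ->
  t i * t i.+1 * t i = t i.+1 * t i * t i.+1.
Hypothesis Hac : forall i j, (0 < i)%N -> (j < n)%N -> (i.+1 < j)%N ->
  t i * t j = - (t j * t i).

Definition inr i := (0 < i < n)%N.
Definition far i j := (i.+1 < j)%N || (j.+1 < i)%N.

Lemma ac_far i j : inr i -> inr j -> far i j -> t i * t j = - (t j * t i).
Proof.
rewrite /inr /far => /andP[i0 iN] /andP[j0 jN] /orP[h|h]; first exact: Hac.
by rewrite (Hac j0 iN h) opprK.
Qed.

Definition word (s : seq nat) : A := \prod_(i <- s) t i.

Lemma word_nil : word [::] = 1. Proof. by rewrite /word big_nil. Qed.
Lemma word_cons i s : word (i :: s) = t i * word s.
Proof. by rewrite /word big_cons. Qed.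
Lemma word_cat s1 s2 : word (s1 ++ s2) = word s1 * word s2.
Proof. by rewrite /word big_cat. Qed.
Lemma word_rcons s i : word (rcons s i) = word s * t i.
Proof. by rewrite -cats1 word_cat /word big_seq1. Qed.

Lemma word_inv s : all inr s -> word s * word (rev s) = 1 /\ word (rev s) * word s = 1.
Proof.
elim: s => [|i s IH] /=; first by rewrite word_nil mulr1.
move=> /andP[hi hs]; have [h1 h2] := IH hs.
rewrite rev_cons word_rcons word_cons; split.
  by rewrite -mulrA (mulrA (word s)) h1 mul1r (Hsq hi).
by rewrite mulrA -(mulrA _ (t i) (t i)) (Hsq hi) mulr1 h2.
Qed.

Lemma sgK k : (-1) ^+ k * (-1) ^+ k = 1 :> A.
Proof. by rewrite -exprD -signr_odd oddD addbb. Qed.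

Lemma mul_sgA (x y : A) k : x * ((-1) ^+ k * y) = (-1) ^+ k * (x * y).
Proof. by rewrite mulrA (commr_sign x) -mulrA. Qed.
Lemma sgM (y : A) a b : (-1) ^+ a * ((-1) ^+ b * y) = (-1) ^+ (a + b)%N * y.
Proof. by rewrite mulrA exprD. Qed.

Lemma word_far s j : all inr s -> inr j -> all (far j) s ->
  word s * t j = (-1) ^+ (size s) * (t j * word s).
Proof.
move=> hs hj hf; elim: s hs hf => [|i s IH] /= hs hf.
  by rewrite word_nil expr0 !mul1r mulr1.
case/andP: hs => hi hs; case/andP: hf => fi fs.
have fij : far i j by move: fi; rewrite /far orbC.
rewrite word_cons -mulrA IH //.
rewrite [LHS]mulrA (commr_sign (t i)) -[LHS]mulrA [t i * (t j * _)]mulrA (ac_far hi hj fij).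
by rewrite exprS mulN1r mulNr !mulNr mulrN !mulrA.
Qed.

Lemma word_comm s s' : all inr s -> all inr s' ->
  (forall x, x \in s' -> all (far x) s) ->
  word s * word s' = (-1) ^+ (size s * size s') * (word s' * word s).
Proof.
move=> hs; elim: s' => [|j s' IH] /= hs' hf.
  by rewrite word_nil mulr1 mul1r muln0 expr0 mul1r.
case/andP: hs' => hj hs'.
rewrite word_cons [LHS]mulrA word_far //; last by apply: hf; rewrite inE eqxx.
rewrite -!mulrA IH //; last by move=> x hx; apply: hf; rewrite inE hx orbT.
rewrite mul_sgA sgM.
by rewrite mulnS addnC !mulrA.
Qed.


Definition itw (u : A) i j := exists k, u * t i = (-1) ^+ k * (t j * u).

Lemma itw_comp u u' i j l : itw u i j -> itw u' j l -> itw (u' * u) i l.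
Proof.
move=> [k1 h1] [k2 h2]; exists (k1 + k2)%N.
by rewrite -mulrA h1 mul_sgA (mulrA u') h2 -!mulrA sgM.
Qed.

Lemma itw_far s j : all inr s -> inr j -> all (far j) s -> itw (word s) j j.
Proof. by move=> *; exists (size s); apply: word_far. Qed.

Lemma all_inr_iota c k : (0 < c)%N -> (c + k <= n)%N -> all inr (iota c k).
Proof. by move=> h1 h2; apply/allP => x; rewrite mem_iota /inr => /andP[h3 h4]; lia. Qed.

Lemma window c k i : (0 < c)%N -> (c + k <= n)%N -> (c <= i)%N -> (i.+2 <= c + k)%N ->
  itw (word (iota c k)) i i.+1.
Proof.
move=> c0 ck ci ik.
have -> : iota c k = iota c (i - c) ++ [:: i, i.+1 & iota i.+2 (c + k - i.+2)%N].
  have -> : k = ((i - c) + (c + k - i.+2).+2)%N by lia.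
  by rewrite iotaD /=; congr (_ ++ _); rewrite (_ : c + (i - c) = i)%N; [|lia];
     rewrite (_ : (c + (i - c + (c + k - i.+2).+2) - i.+2) = c + k - i.+2)%N //; lia.
set L := iota c (i - c); set R := iota i.+2 (c + k - i.+2)%N.
have hL : all inr L by apply: all_inr_iota; lia.
have hR : all inr R by apply: all_inr_iota; lia.
have hi : inr i by rewrite /inr; lia.
have hi1 : inr i.+1 by rewrite /inr; lia.
have fL : all (far i.+1) L by apply/allP => x; rewrite mem_iota /far => ?; lia.
have fR : all (far i) R by apply/allP => x; rewrite mem_iota /far => ?; lia.
exists (size R + size L)%N.
have br : forall x, t i * (t i.+1 * (t i * x)) = t i.+1 * (t i * (t i.+1 * x)).
  by move=> x; rewrite !mulrA Hbr //; lia.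
rewrite word_cat !word_cons -!mulrA (word_far hR hi fR) (mul_sgA (t i.+1)) (mul_sgA (t i)) (mul_sgA (word L)) br.
by rewrite (mulrA (word L)) (word_far hL hi1 fL) -!mulrA sgM.
Qed.

Lemma word_far' s j : all inr s -> inr j -> all (far j) s ->
  t j * word s = (-1) ^+ (size s) * (word s * t j).
Proof.
move=> hs hj hf; rewrite (word_far hs hj hf) sgM.
by rewrite -signr_odd oddD addbb expr0 mul1r.
Qed.

Fixpoint Iw c p := match p with 0 => 1 | p'.+1 => Iw c p' * (t (c + p').+1 * t (c + p')) end.

Lemma I_shift c p : (0 < c)%N -> (c + p < n)%N -> itw (Iw c p) (c + p) c.
Proof.
move=> c0; elim: p => [|p IH] cp.
  by exists 0%N; rewrite addn0 /= expr0 mul1r mulr1 mul1r.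
have [k hk] := IH (ltac:(lia)).
exists k; rewrite addnS /= -mulrA -Hbr; try lia.
rewrite -(mulrA (t (c + p))) mulrA hk -!mulrA //.
Qed.

Lemma E_I c p : (0 < c)%N -> (c + p < n)%N ->
  exists k, word (iota c.+1 p) * word (iota c p) = (-1) ^+ k * Iw c p.
Proof.
move=> c0; elim: p => [|p IH] cp.
  by exists 0%N; rewrite /= word_nil expr0 !mul1r.
have [k hk] := IH (ltac:(lia)).
have hY : all inr (iota c p) by apply: all_inr_iota; lia.
have hj : inr (c.+1 + p) by rewrite /inr; lia.
have fY : all (far (c.+1 + p)) (iota c p) by apply/allP => x; rewrite mem_iota /far => ?; lia.
exists (size (iota c p) + k)%N.
rewrite -(addn1 p) !iotaD !word_cat !word_cons !word_nil !mulr1 /=.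
rewrite -mulrA (mulrA (t _)) (word_far' hY hj fY) -mulrA (mul_sgA (word (iota c.+1 p))).
rewrite -(mulrA (word (iota c p))) (mulrA (word (iota c.+1 p))) hk -mulrA sgM addn1 /= addSn.
by [].
Qed.

Lemma two_step c p : (0 < c)%N -> (c + p < n)%N ->
  itw (word (iota c.+1 p) * word (iota c p)) (c + p) c.
Proof.
move=> c0 cp; have [k hk] := E_I c0 cp; have [k' hk'] := I_shift c0 cp.
exists k'; rewrite hk -mulrA hk' (mul_sgA (t c)) !sgM.
by rewrite addnC.
Qed.

Lemma itw_map u (l : seq nat) (f g : nat -> nat) : (forall x, x \in l -> itw u (f x) (g x)) ->
  exists k, u * word (map f l) = (-1) ^+ k * (word (map g l) * u).
Proof.
elim: l => [|x l IH] /= h.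
  by exists 0%N; rewrite word_nil expr0 mul1r mulr1 mul1r.
have [k hk] := h x (mem_head _ _).
have [k' hk'] := IH (fun y hy => h y (mem_behead (s := x :: l) hy)).
exists (k + k')%N; rewrite !word_cons mulrA hk -!mulrA hk' (mul_sgA (t (g x))) sgM.
by rewrite !mulrA.
Qed.

Fixpoint su (a p k : nat) : seq nat :=
  match k with 0 => [::] | k'.+1 => iota (a + k) p ++ su a p k' end.

Lemma su_S a p k : su a p k.+1 = iota (a + k.+1) p ++ su a p k.
Proof. by []. Qed.

Lemma su_mem a p k x : x \in su a p k -> (a < x < a + k + p)%N.
Proof.
elim: k => [|k IH] //=; rewrite mem_cat mem_iota => /orP[h|/IH h]; lia.
Qed.

Section Swap.
Variables a p q : nat.
Hypotheses (p0 : (0 < p)%N) (q0 : (0 < q)%N) (apq : (a + p + q <= n)%N).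

Lemma block1 i0 k : (0 < i0 < p)%N -> (k <= q)%N -> itw (word (su a p k)) (a + i0) (a + i0 + k).
Proof.
move=> hi; elim: k => [|k IH] hk.
  by exists 0%N; rewrite /= word_nil addn0 expr0 mulr1 !mul1r.
rewrite /= word_cat addnS; apply: (itw_comp (IH (ltnW hk))).
rewrite addnS; apply: window; lia.
Qed.

Lemma block2a j k : (0 < j < q)%N -> (k < j)%N -> itw (word (su a p k)) (a + p + j) (a + p + j).
Proof.
move=> hj; elim: k => [|k IH] hk.
  by exists 0%N; rewrite /= word_nil expr0 mulr1 !mul1r.
rewrite /= word_cat; apply: (itw_comp (IH (ltnW hk))).
apply: itw_far; first (by apply: all_inr_iota; lia); first by rewrite /inr; lia.
by apply/allP => x; rewrite mem_iota /far => ?; lia.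
Qed.

Lemma block2 j : (0 < j < q)%N -> itw (word (su a p q)) (a + p + j) (a + j).
Proof.
move=> hj.
suff H : forall d, (j.+1 + d <= q)%N -> itw (word (su a p (j.+1 + d))) (a + p + j) (a + j).
  by have := H (q - j.+1)%N; rewrite subnKC; [apply; lia | lia].
elim=> [|d IH] hd.
  destruct j as [|j']; first lia.
  rewrite addn0 /= !word_cat mulrA.
  apply: (itw_comp (block2a hj (ltnSn j'))).
  have := @two_step (a + j'.+1) p ltac:(lia) ltac:(lia).
  by rewrite -addnS (addnAC a p).
rewrite addnS su_S word_cat; apply: (itw_comp (IH ltac:(lia))).
apply: itw_far; first (by apply: all_inr_iota; lia); first by rewrite /inr; lia.
by apply/allP => x; rewrite mem_iota /far => ?; lia.
Qed.

Lemma swap_conj : exists k,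
  word (su a p q) * (word (iota (a + 1) (p - 1)) * word (iota (a + p + 1) (q - 1))) =
  (-1) ^+ k * ((word (iota (a + 1) (q - 1)) * word (iota (a + q + 1) (p - 1))) * word (su a p q)).
Proof.
have h1x : forall x, x \in iota 1 (p - 1) -> itw (word (su a p q)) (a + x) (a + q + x).
  by move=> x; rewrite mem_iota => hx; rewrite addnAC; apply: block1; lia.
have h2x : forall x, x \in iota 1 (q - 1) -> itw (word (su a p q)) (a + p + x) (a + x).
  by move=> x; rewrite mem_iota => hx; apply: block2; lia.
have [k1 h1] := itw_map (f := addn a) (g := addn (a + q)) h1x.
have [k2 h2] := itw_map (f := addn (a + p)) (g := addn a) h2x.
rewrite -!iotaDl in h1 h2.
have hc : all (far (a + q + 1)) [::] by [].
have [k3 h3] : exists k3, word (iota (a + q + 1) (p - 1)) * word (iota (a + 1) (q - 1)) =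
   (-1) ^+ k3 * (word (iota (a + 1) (q - 1)) * word (iota (a + q + 1) (p - 1))).
  eexists; apply: word_comm; try (apply: all_inr_iota; lia).
  by move=> x; rewrite mem_iota => hx; apply/allP => y; rewrite mem_iota /far => hy; lia.
exists (k1 + (k2 + k3))%N.
set U := word (su a p q); set B1 := word (iota (a + 1) (p - 1)).
set B2 := word (iota (a + p + 1) (q - 1)); set B1' := word (iota (a + q + 1) (p - 1)).
set B2' := word (iota (a + 1) (q - 1)).
rewrite [LHS]mulrA h1 -[LHS]mulrA -(mulrA B1' U B2) h2 (mul_sgA B1') sgM (mulrA B1') h3.
by rewrite -!mulrA sgM addnA.
Qed.

End Swap.

Definition CJ lo hi (x y : A) := exists s : seq nat,
  (forall i, i \in s -> lo <= i <= hi)%N /\ exists k, word s * x = (-1) ^+ k * (y * word s).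

Lemma CJ_refl lo hi x : CJ lo hi x x.
Proof. by exists [::]; split => //; exists 0%N; rewrite word_nil expr0 mul1r mulr1 mul1r. Qed.

Lemma CJ_trans lo hi x y z : CJ lo hi x y -> CJ lo hi y z -> CJ lo hi x z.
Proof.
move=> [s1 [hs1 [k1 h1]]] [s2 [hs2 [k2 h2]]]; exists (s2 ++ s1); split.
  by move=> i; rewrite mem_cat => /orP[/hs2|/hs1].
exists (k1 + k2)%N; rewrite word_cat -mulrA h1 (mul_sgA (word s2)) (mulrA (word s2)) h2.
by rewrite -!mulrA sgM addnC.
Qed.

Lemma CJ_widen lo hi lo' hi' x y : (lo' <= lo)%N -> (hi <= hi')%N -> CJ lo hi x y -> CJ lo' hi' x y.
Proof.
move=> h1 h2 [s [hs hk]]; exists s; split => // i /hs; lia.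
Qed.

Lemma CJ_liftL lo hi x y sB : (0 < lo)%N -> (hi < n)%N -> all inr sB ->
  (forall i, i \in sB -> i.+1 < lo)%N -> CJ lo hi x y -> CJ lo hi (word sB * x) (word sB * y).
Proof.
move=> l0 hn hB fB [s [hs [k h]]]; exists s; split => //.
have hsi : all inr s by apply/allP => i /hs; rewrite /inr; lia.
have [k' hc] : exists k', word s * word sB = (-1) ^+ k' * (word sB * word s).
  eexists; apply: word_comm => // i /fB hi0; apply/allP => j /hs hj; rewrite /far; lia.
exists (k' + k)%N; rewrite (mulrA (word s)) hc -(mulrA _ _ x) -(mulrA (word sB)) h (mul_sgA (word sB)) sgM.
by rewrite !mulrA.
Qed.

Lemma CJ_liftR lo hi x y sR : (0 < lo)%N -> (hi < n)%N -> all inr sR ->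
  (forall i, i \in sR -> hi.+1 < i)%N -> CJ lo hi x y -> CJ lo hi (x * word sR) (y * word sR).
Proof.
move=> l0 hn hR fR [s [hs [k h]]]; exists s; split => //.
have hsi : all inr s by apply/allP => i /hs; rewrite /inr; lia.
have [k' hc] : exists k', word s * word sR = (-1) ^+ k' * (word sR * word s).
  eexists; apply: word_comm => // i /fR hi0; apply/allP => j /hs hj; rewrite /far; lia.
exists (k + k')%N; rewrite (mulrA (word s)) h -(mulrA _ _ (word sR)) -(mulrA y) hc (mul_sgA y) sgM.
by rewrite !mulrA.
Qed.

Fixpoint cidx (a : nat) (g : seq nat) : seq nat :=
  match g with [::] => [::] | k :: g' => iota a.+1 k.-1 ++ cidx (a + k) g' end.

Lemma tcf_word a g : t_comp_from t a g = word (cidx a g).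
Proof.
elim: g a => [|k g IH] a /=; first by rewrite word_nil.
rewrite IH word_cat; congr (_ * _); rewrite /word /index_iota.
by congr (bigop _ _ _); congr iota; lia.
Qed.

Lemma cidx_mem a g x : x \in cidx a g -> (a < x < a + sumn g)%N.
Proof.
elim: g a => [|k g IH] a //=; rewrite mem_cat mem_iota => /orP[h|/IH h]; lia.
Qed.

Lemma cidx_size a g : all (fun k => 0 < k)%N g -> (size (cidx a g) + size g = sumn g)%N.
Proof.
elim: g a => [|k g IH] a //= /andP[k0 hg]; rewrite size_cat size_iota.
have := IH (a + k)%N hg; lia.
Qed.

Lemma tcf_cons a k g : t_comp_from t a (k :: g) = word (iota a.+1 k.-1) * t_comp_from t (a + k) g.
Proof. by rewrite !tcf_word /= word_cat. Qed.

Lemma tcf_cat a g1 g2 : t_comp_from t a (g1 ++ g2) = t_comp_from t a g1 * t_comp_from t (a + sumn g1) g2.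
Proof.
elim: g1 a => [|k g IH] a /=; first by rewrite mul1r addn0.
by rewrite IH mulrA addnA.
Qed.

Lemma swapCJ a x y : (0 < x)%N -> (0 < y)%N -> (a + x + y <= n)%N ->
  CJ (a + 1) (a + x + y - 1) (word (iota a.+1 x.-1) * word (iota (a + x).+1 y.-1))
     (word (iota a.+1 y.-1) * word (iota (a + y).+1 x.-1)).
Proof.
move=> x0 y0 hn; have [k h] := swap_conj x0 y0 hn.
exists (su a x y); split; first by move=> i /su_mem; lia.
by exists k; rewrite !addn1 !subn1 in h.
Qed.

Lemma cidx_inr a g : (a + sumn g <= n)%N -> all inr (cidx a g).
Proof. by move=> h; apply/allP => i /cidx_mem; rewrite /inr; lia. Qed.

Lemma move_front l : forall a x r, (0 < x)%N -> all (fun k => 0 < k)%N (l ++ r) ->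
  (a + x + sumn l + sumn r <= n)%N ->
  CJ (a + 1) (a + x + sumn l + sumn r - 1) (t_comp_from t a (x :: l ++ r)) (t_comp_from t a (l ++ x :: r)).
Proof.
elim: l => [|y l IH] a x r x0 hp hn; first exact: CJ_refl.
move: hp hn; rewrite cat_cons [all _ (_ :: _)]/= [sumn (y :: l)]/= => /andP[y0 hp] hn.
apply: (@CJ_trans _ _ _ (t_comp_from t a (y :: x :: l ++ r))).
  rewrite !tcf_cons !mulrA (addnAC a y x) !tcf_word.
  apply: (@CJ_widen (a + 1) (a + x + y - 1)); try lia.
  apply: CJ_liftR; first lia; first lia.
  - apply: cidx_inr; rewrite sumn_cat; lia.
  - move=> i /cidx_mem; rewrite sumn_cat; lia.
  by apply: swapCJ => //; lia.
rewrite [t_comp_from t a (y :: _)]tcf_cons [t_comp_from t a (y :: _)]tcf_cons.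
apply: (@CJ_widen (a + y + 1) (a + y + x + sumn l + sumn r - 1)); try lia.
apply: CJ_liftL; first lia; first lia.
- apply: all_inr_iota; lia.
- move=> i; rewrite mem_iota; lia.
apply: IH => //; lia.
Qed.

Lemma perm_CJ g : forall a g', all (fun k => 0 < k)%N g -> (a + sumn g <= n)%N -> perm_eq g g' ->
  CJ (a + 1) (a + sumn g - 1) (t_comp_from t a g) (t_comp_from t a g').
Proof.
elim: g => [|x g1 IH] a g' hp hn hperm.
  by move: hperm; rewrite perm_sym => /perm_nilP ->; apply: CJ_refl.
have hx : x \in g' by rewrite -(perm_mem hperm) mem_head.
case/splitPr: g' / hx hperm => l r hperm.
have hp' : all (fun k => 0 < k)%N (l ++ x :: r) by rewrite -(perm_all _ hperm).
have h2 : perm_eq g1 (l ++ r).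
  have : perm_eq (l ++ x :: r) (x :: l ++ r) by rewrite (perm_catCA l [:: x] r).
  by move=> h; rewrite -(perm_cons x); apply: perm_trans hperm h.
have hs : sumn (x :: g1) = (x + sumn l + sumn r)%N.
  by rewrite /= (perm_sumn h2) sumn_cat addnA.
case/andP: hp => x0 hp1.
have hlr : all (fun k => 0 < k)%N (l ++ r) by rewrite -(perm_all _ h2).
apply: (@CJ_trans _ _ _ (t_comp_from t a (x :: l ++ r))).
  rewrite !tcf_cons.
  apply: (@CJ_widen (a + x + 1) (a + x + sumn g1 - 1)); try (move: hs; rewrite /=; lia).
  apply: CJ_liftL; first lia; first (move: hs hn; rewrite /=; lia).
  - apply: all_inr_iota; move: hs hn; rewrite /=; lia.
  - move=> i; rewrite mem_iota; lia.
  apply: IH => //; move: hn; rewrite /=; lia.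
rewrite hs; have -> : (a + (x + sumn l + sumn r) - 1 = a + x + sumn l + sumn r - 1)%N by lia.
apply: move_front => //; move: hn; rewrite hs; lia.
Qed.

Lemma odd_case gamma : all (fun k => 0 < k)%N gamma -> sumn gamma = n ->
  exists e : bool, in_comm_span (t_comp t gamma - ((-1) ^+ e : CC) *: t_comp t (comp_sort gamma)).
Proof.
move=> hp hs.
have hperm : perm_eq gamma (comp_sort gamma) by rewrite perm_sym /comp_sort perm_sort.
have [s [hsupp [k h]]] := @perm_CJ gamma 0 _ hp ltac:(lia) hperm.
rewrite /t_comp in h *.
set tg := t_comp_from t 0 gamma in h *; set tm := t_comp_from t 0 (comp_sort gamma) in h *.
have hsi : all inr s by apply/allP => i /hsupp; rewrite /inr; lia.
have [w1 w2] := word_inv hsi.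
set W := word s in h w1 w2 *; set W' := word (rev s) in w1 w2 *.
have htm : tm = (-1) ^+ k * (W * tg * W').
  by rewrite h -!mulrA w1 mulr1 sgM -signr_odd oddD addbb expr0 mul1r.
exists (odd k); exists [:: (1, (W', W * tg))].
rewrite big_seq1 /= scale1r.
have -> : ((-1) ^+ odd k : CC) *: tm = (-1) ^+ k * tm.
  by rewrite -[in RHS]signr_odd; case: (odd k); rewrite ?expr1 ?expr0 ?scaleN1r ?scale1r ?mulN1r ?mul1r.
rewrite htm sgM -signr_odd oddD addbb expr0 mul1r.
by rewrite mulrA w2 mul1r.
Qed.

Lemma two_nz : (2 : CC) != 0.
Proof. have H : (2 : Rdefinitions.R[i]) != 0 by rewrite pnatr_eq0. exact H. Qed.

Lemma even_case g1 x g2 : all (fun k => 0 < k)%N (g1 ++ x :: g2) -> sumn (g1 ++ x :: g2) = n ->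
  ~~ odd x -> ~~ odd (n - size (g1 ++ x :: g2)) -> in_comm_span (t_comp t (g1 ++ x :: g2)).
Proof.
move=> hp hs hx hev.
move: hp; rewrite all_cat /= => /andP[hp1 /andP[x0 hp2]].
move: hs hev; rewrite sumn_cat size_cat /= => hs hev.
have hz1 := @cidx_size 0 g1 hp1; have hz2 := @cidx_size (sumn g1 + x) g2 hp2.
rewrite /t_comp tcf_cat tcf_cons add0n !tcf_word.
set sX := cidx 0 g1; set sT := iota (sumn g1).+1 x.-1; set sY := cidx (sumn g1 + x) g2.
have iX : all inr sX by apply: cidx_inr; lia.
have iY : all inr sY by apply: cidx_inr; lia.
have iT : all inr sT by apply: all_inr_iota; lia.
have hc : word sT * word (sY ++ sX) = - (word (sY ++ sX) * word sT).
  rewrite word_comm //; first last.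
  - move=> i; rewrite mem_cat => /orP[/cidx_mem hi|/cidx_mem hi]; apply/allP => j;
      rewrite mem_iota /far; lia.
  - by rewrite all_cat iY iX.
  rewrite -signr_odd oddM size_cat size_iota.
  have -> : odd x.-1 by move: hx x0; clear; lia.
  have -> : odd (size sY + size sX) by rewrite /sY /sX; move: hx x0 hz1 hz2 hev hs; clear; lia.
  by rewrite expr1 mulN1r.
rewrite word_cat in hc.
set X := word sX in hc *; set T := word sT in hc *; set Y := word sY in hc *.
exists [:: (2^-1, (X, T * Y)); (- 2^-1, (Y, X * T))].
rewrite big_cons big_seq1 /=.
have e1 : T * Y * X = - (Y * (X * T)) by rewrite -mulrA hc !mulrA.
rewrite e1 !mulrA scaleNr -scalerBr opprK.
set v := X * T * Y; set w := Y * X * T.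
rewrite opprB addrACA subrr addr0.
have -> : v + v = (2 : CC) *: v by rewrite scaler_nat mulr2n.
rewrite scalerA mulVf ?two_nz //.
by rewrite scale1r.
Qed.

End Words.
Lemma rel_extract (A : algType CC) n (t b : nat -> A) : spin_hecke_rel n t b ->
  [/\ (forall i, (0 < i < n)%N -> t i * t i = 1),
      (forall i, (0 < i)%N -> (i.+1 < n)%N -> t i * t i.+1 * t i = t i.+1 * t i * t i.+1) &
      (forall i j, (0 < i)%N -> (j < n)%N -> (i.+1 < j)%N -> t i * t j = - (t j * t i))].
Proof.
case=> [H1 [H2 [H3 _]]]; split.
- move=> i hi; apply: H1; lia.
- move=> i h1 h2; apply: H2; lia.
- move=> i j h1 h2 h3.
  have h : (t i * t j) ^+ 2 = -1 by apply: H3; [lia|lia|rewrite h3].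
  have e2 : t i * t j * (t j * t i) = 1.
    by rewrite mulrA -(mulrA (t i)) H1 ?mulr1 ?H1 //; lia.
  by rewrite -[LHS]mulr1 -e2 mulrA -expr2 h mulN1r.
Qed.

Section Prod.
Variables A1 A2 : algType CC.
Local Notation A12 := (A1 * A2)%type.

Lemma pair_eq (x y : A12) : x.1 = y.1 -> x.2 = y.2 -> x = y.
Proof. by case: x; case: y => ? ? ? ? /= -> ->. Qed.

Lemma fst_sum I (s : seq I) (F : I -> A12) : (\sum_(i <- s) F i).1 = \sum_(i <- s) (F i).1.
Proof. by elim: s => [|i s IH]; rewrite ?big_nil ?big_cons //= IH. Qed.
Lemma snd_sum I (s : seq I) (F : I -> A12) : (\sum_(i <- s) F i).2 = \sum_(i <- s) (F i).2.
Proof. by elim: s => [|i s IH]; rewrite ?big_nil ?big_cons //= IH. Qed.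
Lemma fst_prod I (s : seq I) (F : I -> A12) : (\prod_(i <- s) F i).1 = \prod_(i <- s) (F i).1.
Proof. by elim: s => [|i s IH]; rewrite ?big_nil ?big_cons //= IH. Qed.
Lemma snd_prod I (s : seq I) (F : I -> A12) : (\prod_(i <- s) F i).2 = \prod_(i <- s) (F i).2.
Proof. by elim: s => [|i s IH]; rewrite ?big_nil ?big_cons //= IH. Qed.

Variables (t1 b1 : nat -> A1) (t2 b2 : nat -> A2).
Definition t12 i : A12 := (t1 i, t2 i).
Definition b12 i : A12 := (b1 i, b2 i).

Lemma tcf_fst a g : (t_comp_from t12 a g).1 = t_comp_from t1 a g.
Proof. by elim: g a => [|k g IH] a //=; rewrite IH fst_prod. Qed.
Lemma tcf_snd a g : (t_comp_from t12 a g).2 = t_comp_from t2 a g.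
Proof. by elim: g a => [|k g IH] a //=; rewrite IH snd_prod. Qed.

Lemma rel12 n : spin_hecke_rel n t1 b1 -> spin_hecke_rel n t2 b2 -> spin_hecke_rel n t12 b12.
Proof.
case=> [a1 [a2 [a3 [a4 [a5 a6]]]]] [c1 [c2 [c3 [c4 [c5 c6]]]]].
split; [|split; [|split; [|split; [|split]]]].
- by move=> i h; apply: pair_eq => /=; [apply: a1|apply: c1].
- by move=> i h h'; apply: pair_eq => /=; [apply: a2|apply: c2].
- by move=> i j h h' h''; rewrite expr2; apply: pair_eq => /=; rewrite -expr2; [apply: a3|apply: c3].
- by move=> i j h h' h''; apply: pair_eq => /=; [apply: a4|apply: c4].
- by move=> i h; apply: pair_eq => /=; [apply: a5|apply: c5].
- by move=> i j h h' h'' h'''; apply: pair_eq => /=; [apply: a6|apply: c6].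
Qed.

Lemma span_fst (v : A12) : in_comm_span v -> in_comm_span v.1.
Proof.
case=> s ->; exists (map (fun p => (p.1, (p.2.1.1, p.2.2.1))) s).
by rewrite big_map fst_sum.
Qed.
Lemma span_snd (v : A12) : in_comm_span v -> in_comm_span v.2.
Proof.
case=> s ->; exists (map (fun p => (p.1, (p.2.1.2, p.2.2.2))) s).
by rewrite big_map snd_sum.
Qed.

End Prod.


Unset Implicit Arguments.
Theorem proposition7p1p1 (n : nat) (gamma : seq nat) :
  is_composition n gamma ->
  ~~ odd (n - size gamma) ->
  let mu := comp_sort gamma in
  (has (fun k => ~~ odd k) mu ->
     forall (A : algType CC) (t b : nat -> A),
       spin_hecke_rel n t b -> in_comm_span (t_comp t gamma)) /\
  (all odd mu ->
     exists eps : CC, (eps = 1 \/ eps = -1) /\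
       forall (A : algType CC) (t b : nat -> A),
         spin_hecke_rel n t b ->
         in_comm_span (t_comp t gamma - eps *: t_comp t mu)).
Proof.
move=> /andP[hp /eqP hs] hev mu; split.
  move=> hhas A t b hrel; have [Hsq Hbr Hac] := rel_extract hrel.
  have hpe : perm_eq mu gamma by rewrite /mu /comp_sort perm_sort.
  rewrite (perm_has _ hpe) in hhas.
  case/hasP: hhas => x hx hodd.
  case/splitPr: gamma / hx hp hs hev {mu hpe} => g1 g2 hp hs hev.
  exact: (even_case Hac hp hs hodd hev).
move=> _.
have key : forall (A1 A2 : algType CC) (t1 b1 : nat -> A1) (t2 b2 : nat -> A2),
    spin_hecke_rel n t1 b1 -> spin_hecke_rel n t2 b2 ->
    exists e : bool, in_comm_span (t_comp t1 gamma - ((-1) ^+ e : CC) *: t_comp t1 mu) /\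
                     in_comm_span (t_comp t2 gamma - ((-1) ^+ e : CC) *: t_comp t2 mu).
  move=> A1 A2 t1 b1 t2 b2 r1 r2.
  have r12 := rel12 r1 r2.
  have [Hsq Hbr Hac] := rel_extract r12.
  have [e he] := odd_case Hsq Hbr Hac hp hs.
  exists e; split.
    by have := span_fst he; rewrite /= /t_comp !tcf_fst.
  by have := span_snd he; rewrite /= /t_comp !tcf_snd.
pose P (e : bool) := forall (A : algType CC) (t b : nat -> A), spin_hecke_rel n t b ->
  in_comm_span (t_comp t gamma - ((-1) ^+ e : CC) *: t_comp t mu).
case: (classic (P false)) => [HP|nP0].
  by exists 1; split; [by left|]; move=> A t b r; have := HP A t b r; rewrite expr0.
case: (classic (P true)) => [HP|nP1].
  by exists (-1); split; [by right|]; move=> A t b r; have := HP A t b r; rewrite expr1.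
exfalso.
have [A1 nA1] := not_all_ex_not _ _ nP0.
have [t1 nt1] := not_all_ex_not _ _ nA1.
have [b1 nb1] := not_all_ex_not _ _ nt1.
have [r1 ns1] := imply_to_and _ _ nb1.
have [A2 nA2] := not_all_ex_not _ _ nP1.
have [t2 nt2] := not_all_ex_not _ _ nA2.
have [b2 nb2] := not_all_ex_not _ _ nt2.
have [r2 ns2] := imply_to_and _ _ nb2.
have [[] [h1 h2]] := key A1 A2 t1 b1 t2 b2 r1 r2.
  exact: ns2 h2.
exact: ns1 h1.
Qed.
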